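(* Let $\{V_0(n)\}_{n\in\mathbb{Z}}$, $\{V_1(n)\}_{n\in\mathbb{Z}}$ be real-valued sequences and $\{f_1(n)\}_{n\in\mathbb{Z}}$ a sequence. Consider the operators on complex-valued sequences $\ell(\mathbb{Z};\mathbb{C})$ $$H_0=-\bigtriangleup^2+V_0(n),\qquad H_1=-\bigtriangleup^2+V_1(n),$$ $$\big(A_1^{(n)}\big)^+=-\bigtriangleup+f_1(n),\qquad \big(A_1^{(n+2)}\big)^+=-\bigtriangleup+f_1(n+2),$$ where $V_0(n)$, $V_1(n)$, $f_1(n)$, $f_1(n+2)$ act as multiplication operators (i.e. $(f_1(n+2)\psi)(n)=f_1(n+2)\psi(n)$). If the operator identity $$H_1\big(A_1^{(n)}\big)^+=\big(A_1^{(n+2)}\big)^+H_0$$ holds on $\ell(\mathbb{Z};\mathbb{C})$, then for all $n$ $$V_1(n)=V_0(n+1)-2\bigtriangleup f_1(n+1),$$ $$-\bigtriangleup^2 f_1(n)+\bigtriangleup V_0(n)-2f_1(n)\bigtriangleup f_1(n+1)=-f_1(n)V_0(n+1)+f_1(n+2)V_0(n).$$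
   Context: For a sequence $\psi:\mathbb{Z}\to\mathbb{C}$, the forward difference is $\bigtriangleup\psi(n)=\psi(n+1)-\psi(n)$ and $\bigtriangleup^2\psi(n)=\psi(n+2)-2\psi(n+1)+\psi(n)$. *)

(* Defs.v *)
From mathcomp Require Import all_boot all_order all_algebra.
From mathcomp Require Import reals.
From mathcomp Require Export complex.
Set Implicit Arguments. Unset Strict Implicit. Unset Printing Implicit Defensive.
Import Order.TTheory GRing.Theory Num.Theory.
Local Open Scope ring_scope.

Section Defs.
Variable R : realType.

Definition fdiff (psi : int -> R[i]) : int -> R[i] :=
  fun n => psi (n + 1) - psi n.

Definition cseq (V : int -> R) : int -> R[i] := fun n => (V n)%:C%C.

Definition Hop (V : int -> R) (psi : int -> R[i]) : int -> R[i] :=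
  fun n => - fdiff (fdiff psi) n + (V n)%:C%C * psi n.

Definition Aplus (g : int -> R[i]) (psi : int -> R[i]) : int -> R[i] :=
  fun n => - fdiff psi n + g n * psi n.
End Defs.

(* Main.v *)
Require Import Defs.
From mathcomp Require Import all_boot all_order all_algebra.
From mathcomp Require Import reals complex.
From mathcomp Require Import zify ring.
Import Order.TTheory GRing.Theory Num.Theory.
Local Open Scope ring_scope.

Theorem theorem1 (R : realType) (V0 V1 : int -> R) (f1 : int -> R[i]) :
  (forall psi : int -> R[i],
      Hop V1 (Aplus f1 psi) = Aplus (fun n => f1 (n + 2)) (Hop V0 psi)) ->
  forall n : int,
    (V1 n)%:C%C = (V0 (n + 1))%:C%C - 2%:R * fdiff f1 (n + 1) /\
    - fdiff (fdiff f1) n + fdiff (cseq V0) n - 2%:R * f1 n * fdiff f1 (n + 1)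
      = - f1 n * (V0 (n + 1))%:C%C + f1 (n + 2) * (V0 n)%:C%C.
Proof.
move=> H n.
pose d k := fun m : int => if m == k then 1 else 0 : R[i].
have E1 := congr1 (fun F => F n) (H (d (n+1))).
have E0 := congr1 (fun F => F n) (H (d n)).
rewrite /Hop /Aplus /fdiff /d in E1 E0.
have e1 : (n + 1 + 1 + 1 == n + 1) = false by apply/negbTE/eqP; lia.
have e2 : (n + 1 + 1 == n + 1) = false by apply/negbTE/eqP; lia.
have e3 : (n == n + 1) = false by apply/negbTE/eqP; lia.
have e4 : (n + 1 + 1 + 1 == n) = false by apply/negbTE/eqP; lia.
have e5 : (n + 1 + 1 == n) = false by apply/negbTE/eqP; lia.
have e6 : (n + 1 == n) = false by apply/negbTE/eqP; lia.
have h2 : n + 1 + 1 = n + 2 by rewrite -addrA.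
rewrite !e1 !e2 !e3 !e4 !e5 !e6 !eqxx h2 in E1 E0.
rewrite /fdiff /cseq h2.
move: E1 E0.
generalize (V1 n)%:C%C (V0 n)%:C%C (V0 (n+1))%:C%C (f1 n) (f1 (n+1)) (f1 (n+2)).
move=> c a b x y z.
move=> /eqP; rewrite -subr_eq0 => /eqP E1.
move=> /eqP; rewrite -subr_eq0 => /eqP E0.
have Hc : c = b - 2 * (z - y).
  apply/eqP; rewrite -subr_eq0 -oppr_eq0; apply/eqP; rewrite -E1; ring.
split => //.
subst c.
apply/eqP; rewrite -subr_eq0; apply/eqP; rewrite -E0; ring.
Qed.
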